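(* Let $(X,A,\prec)$ be an alignment of the family $\{(X_a,\prec_a)\}_{a\in I}$, let $\mathfrak{P}=\{I_1,\dots,I_p\}$ be a partition of $I$ and $X_k=\dot\bigcup_{a\in I_k}X_a$. For each $k$ let $Z_k$ be the set of nonempty sets $Q\cap X_k$, $Q\in\mathcal{C}(X,A)$ (the columns of $(X,A)[X_k]$), strictly partially ordered by $P\cap X_k\prec_k Q\cap X_k$ iff $P\prec Q$. Let $(X,A)/\mathfrak{P}$ be the graph whose vertex set is $\dot\bigcup_k Z_k$ (elements of $Z_k$ written $(k,Q\cap X_k)$) and whose edges are the pairs $\{(k,Q\cap X_k),(l,Q\cap X_l)\}$ with $k\neq l$, $Q\in\mathcal{C}(X,A)$ and both $Q\cap X_k$, $Q\cap X_l$ nonempty. Its connected components are exactly the sets $Q/\mathfrak{P}=\{(k,Q\cap X_k): Q\cap X_k\neq\emptyset\}$, $Q\in\mathcal{C}(X,A)$, in bijection with $\mathcal{C}(X,A)$; order them by $P/\mathfrak{P}\prec' Q/\mathfrak{P}$ iff $P\prec Q$. Then $((X,A)/\mathfrak{P},\prec')$ is an alignment of the family of posets $\{(Z_k,\prec_k)\}_{k=1}^p$.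
   Context: Let $I$ be a finite index set (''rows''), and for each $a\in I$ let $(X_a,\prec_a)$ be a finite set with a strict partial order. Elements of $X_a$ are written $(a,i)$, and $X=\dot\bigcup_{a\in I}X_a$. For a simple undirected graph $(X,A)$, $\mathcal{C}(X,A)$ denotes its set of connected components (''columns''). An alignment of a family of finite strict posets $(X_a,\prec_a)$ is a triple $(X,A,\prec)$ where $\prec$ is a strict partial order on $\mathcal{C}(X,A)$ such that: (P1) every $Q\in\mathcal{C}(X,A)$ induces a complete subgraph of $(X,A)$; (P2) if $(a,i)\in Q$ and $(a,j)\in Q$ then $i=j$; (P3) if $(a,i)\in P$, $(a,j)\in Q$ and $(a,i)\prec_a(a,j)$ then $P\prec Q$; (P4) if $P\prec Q$, $(a,i)\in P$ and $(a,j)\in Q$, then $(a,i)\prec_a(a,j)$ or $(a,i)$ and $(a,j)$ are incomparable w.r.t. $\prec_a$. *)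

(* Defs.v *)
From HB Require Import structures.
From mathcomp Require Import all_boot.
Set Implicit Arguments. Unset Strict Implicit. Unset Printing Implicit Defensive.

(* A family of finite strict posets (X_a, <_a), a in I, is encoded by a single
   finite type T (the disjoint union X), a row map r : T -> I (x lies in X_(r x)),
   and a relation po : rel T relating only elements of the same row. *)
Definition strict_family (I T : finType) (r : T -> I) (po : rel T) : Prop :=
  [/\ (forall x, ~~ po x x),
      (forall x y z, po x y -> po y z -> po x z) &
      (forall x y, po x y -> r x = r y)].

Definition columns (T : finType) (e : rel T) : {set {set T}} :=
  [set [set y | connect e x y] | x : T].

(* (T, e, lt) is an alignment of the family (r, po); lt is a relation on sets of
   vertices, only meaningful on columns. *)
Definition alignment (I T : finType) (r : T -> I) (po e : rel T)
    (lt : rel {set T}) : Prop :=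
  symmetric e /\ irreflexive e /\
  (forall P, P \in columns e -> ~~ lt P P) /\
  (forall P Q R, P \in columns e -> Q \in columns e -> R \in columns e ->
     lt P Q -> lt Q R -> lt P R) /\
  (forall Q, Q \in columns e -> forall x y, x \in Q -> y \in Q -> x != y -> e x y) /\
  (forall Q, Q \in columns e -> forall x y, x \in Q -> y \in Q -> r x = r y -> x = y) /\
  (forall P Q, P \in columns e -> Q \in columns e -> forall x y,
     x \in P -> y \in Q -> r x = r y -> po x y -> lt P Q) /\
  (forall P Q, P \in columns e -> Q \in columns e -> lt P Q -> forall x y,
     x \in P -> y \in Q -> r x = r y -> po x y || ~~ po y x).

(* The partition {I_1,...,I_p} of I is given by blk : I -> 'I_p (I_k = blk^-1 k). *)

Definition Xk (I T : finType) (r : T -> I) (p : nat) (blk : I -> 'I_p) (k : 'I_p)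
  : {set T} := [set x | blk (r x) == k].

Definition zpred (I T : finType) (r : T -> I) (e : rel T) (p : nat) (blk : I -> 'I_p)
  (z : 'I_p * {set T}) : bool :=
  [exists Q in columns e, (z.2 == Q :&: Xk r blk z.1) && (z.2 != set0)].

Definition Zq (I T : finType) (r : T -> I) (e : rel T) (p : nat) (blk : I -> 'I_p)
  : finType := {z : 'I_p * {set T} | zpred r e blk z}.

Section Quot.
Variables (I T : finType) (r : T -> I) (e : rel T) (lt : rel {set T})
          (p : nat) (blk : I -> 'I_p).

Local Notation Z := (Zq r e blk).

Definition zrow (z : Z) : 'I_p := (val z).1.

Definition zord : rel Z := fun z w =>
  (zrow z == zrow w) &&
  [exists P in columns e, exists Q in columns e,
     [&& (val z).2 == P :&: Xk r blk (zrow z),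
         (val w).2 == Q :&: Xk r blk (zrow w) & lt P Q]].

Definition zedge : rel Z := fun z w =>
  (zrow z != zrow w) &&
  [exists Q in columns e,
     ((val z).2 == Q :&: Xk r blk (zrow z)) && ((val w).2 == Q :&: Xk r blk (zrow w))].

Definition qcol (Q : {set T}) : {set Z} :=
  [set z : Z | (val z).2 == Q :&: Xk r blk (zrow z)].

Definition zlt : rel {set Z} := fun C D =>
  [exists P in columns e, exists Q in columns e,
     [&& C == qcol P, D == qcol Q & lt P Q]].

End Quot.

Arguments zrow {I T} r e {p} blk z.
Arguments zord {I T} r e lt {p} blk _ _.
Arguments zedge {I T} r e {p} blk _ _.
Arguments zlt {I T} r e lt {p} blk _ _.

(* Main.v *)
Require Import Defs.
From HB Require Import structures.
From mathcomp Require Import all_boot.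

Section H.
#[local] Set Implicit Arguments.
Variables (I T : finType) (r : T -> I) (e : rel T) (p : nat) (blk : I -> 'I_p).
Hypothesis esym : symmetric e.

Local Notation Z := (Zq r e blk).
Local Notation X := (Xk r blk).

Lemma col_eq P Q x : P \in columns e -> Q \in columns e -> x \in P -> x \in Q -> P = Q.
Proof.
move=> /imsetP[a _ ->] /imsetP[b _ ->]; rewrite !inE => ha hb.
have cs := sym_connect_sym esym.
apply/setP=> y; rewrite !inE; apply/idP/idP => h.
- by apply: (connect_trans hb); apply: (connect_trans _ h); rewrite cs.
- by apply: (connect_trans ha); apply: (connect_trans _ h); rewrite cs.
Qed.

Lemma col_eqS P Q k l : P \in columns e -> Q \in columns e ->
  P :&: X k = Q :&: X l -> P :&: X k != set0 -> P = Q.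
Proof.
move=> hP hQ E /set0Pn[x hx]; have hx' := hx; rewrite E in hx'.
move: hx hx'; rewrite !inE => /andP[hxP _] /andP[hxQ _]; exact: col_eq hP hQ hxP hxQ.
Qed.

Lemma zP (z : Z) : exists2 Q, Q \in columns e &
  (val z).2 = Q :&: X (zrow r e blk z) /\ (val z).2 != set0.
Proof.
have /existsP[Q /andP[hQ /andP[/eqP E h]]] := valP z.
by exists Q.
Qed.

Lemma zuniq (z : Z) Q Q' : Q \in columns e -> Q' \in columns e ->
  (val z).2 = Q :&: X (zrow r e blk z) -> (val z).2 = Q' :&: X (zrow r e blk z) -> Q = Q'.
Proof.
move=> hQ hQ' E1 E2; have [_ _ [_ nz]] := zP z.
apply: (@col_eqS Q Q' (zrow r e blk z) (zrow r e blk z) hQ hQ'); first by rewrite -E1 -E2.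
by rewrite -E1.
Qed.

Lemma zeq (z w : Z) Q : zrow r e blk z = zrow r e blk w ->
  (val z).2 = Q :&: X (zrow r e blk z) -> (val w).2 = Q :&: X (zrow r e blk w) -> z = w.
Proof.
move=> R E1 E2; apply: val_inj.
rewrite [val z]surjective_pairing [val w]surjective_pairing E1 E2.
by rewrite /zrow in R *; rewrite R.
Qed.

Lemma comp_qcol (z : Z) Q : Q \in columns e -> (val z).2 = Q :&: X (zrow r e blk z) ->
  [set w | connect (zedge r e blk) z w] = qcol r e blk Q.
Proof.
move=> hQ Ez; apply/setP => w; rewrite !inE; apply/idP/idP.
- have zsym : symmetric (zedge r e blk).
    move=> a b; rewrite /zedge eq_sym; congr (_ && _).
    apply/existsP/existsP => -[R /andP[hR /andP[h1 h2]]]; exists R; by rewrite hR h1 h2.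
  have cl : closed (zedge r e blk) (qcol r e blk Q).
    apply: (intro_closed (sym_connect_sym zsym)) => a b /andP[_ /existsP[R /andP[hR /andP[/eqP h1 /eqP h2]]]].
    rewrite !inE => /eqP ha.
    have -> : Q = R by exact: (@zuniq a Q R hQ hR ha h1).
    by rewrite h2.
  move=> /(closed_connect cl); rewrite !inE Ez eqxx => <-.
  by [].
- move=> /eqP Ew.
  have [R|R] := eqVneq (zrow r e blk z) (zrow r e blk w).
  + by rewrite (@zeq z w Q R Ez Ew) connect0.
  + apply: connect1; rewrite /zedge R /=; apply/existsP; exists Q.
    by rewrite hQ Ez Ew !eqxx.
Qed.

Definition mkz (x : T) (Q : {set T}) (hQ : Q \in columns e) (hx : x \in Q) : Z.
Proof.
refine (@Sub _ _ Z (blk (r x), Q :&: X (blk (r x))) _).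
apply/existsP; exists Q; rewrite hQ eqxx /=.
by apply/set0Pn; exists x; rewrite !inE hx eqxx.
Defined.

Lemma mkz_in x Q hQ hx : @mkz x Q hQ hx \in qcol r e blk Q.
Proof. by rewrite inE /=. Qed.

Lemma zsym : symmetric (zedge r e blk).
Proof.
move=> a b; rewrite /zedge eq_sym; congr (_ && _).
apply/existsP/existsP => -[R /andP[hR /andP[h1 h2]]]; exists R; by rewrite hR h1 h2.
Qed.

End H.

Theorem lemma5 (I T : finType) (r : T -> I) (po e : rel T) (lt : rel {set T})
    (p : nat) (blk : I -> 'I_p) :
  strict_family r po ->
  alignment r po e lt ->
  (forall k : 'I_p, exists a : I, blk a = k) ->
  [/\ columns (zedge r e blk) = [set qcol r e blk Q | Q in columns e],
      {in columns e &, injective (qcol r e blk)},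
      strict_family (zrow r e blk) (zord r e lt blk) &
      alignment (zrow r e blk) (zord r e lt blk) (zedge r e blk) (zlt r e lt blk)].
Proof.
move=> _ [esym [eirr [ltirr [lttr _]]]] _.
have inj : {in columns e &, injective (qcol r e blk)}.
  move=> P Q hP hQ E.
  have [x hxP] : exists x, x \in P.
    by case/imsetP: hP => a _ ->; exists a; rewrite inE connect0.
  have := mkz_in _ r blk hP hxP; rewrite E inE /= => /eqP E2.
  have : x \in Q :&: Xk r blk (blk (r x)) by rewrite -E2 !inE hxP eqxx.
  rewrite inE => /andP[hxQ _]; exact: (col_eq esym hP hQ hxP hxQ).
have colE : columns (zedge r e blk) = [set qcol r e blk Q | Q in columns e].
  apply/setP => C; apply/imsetP/imsetP.
  - case=> z _ ->; have [Q hQ [Ez _]] := zP z.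
    by exists Q => //; apply: comp_qcol.
  - case=> Q hQ ->.
    have [x hxQ] : exists x, x \in Q.
      by case/imsetP: hQ => a _ ->; exists a; rewrite inE connect0.
    exists (mkz _ r blk hQ hxQ) => //; symmetry; apply: comp_qcol => //.
have zu := @zuniq I T r e p blk esym.
split => //.
- split.
  + move=> z; apply/negP => /andP[_ /existsP[P /andP[hP /existsP[Q /andP[hQ /and3P[/eqP h1 /eqP h2 hl]]]]]].
    have PQ := zu _ _ _ hP hQ h1 h2; subst Q.
    by move: (ltirr P hP); rewrite hl.
  + move=> x y z /andP[/eqP r1 /existsP[P /andP[hP /existsP[Q /andP[hQ /and3P[/eqP h1 /eqP h2 l1]]]]]].
    move=> /andP[/eqP r2 /existsP[Q' /andP[hQ' /existsP[R /andP[hR /and3P[/eqP h3 /eqP h4 l2]]]]]].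
    have QQ := zu _ _ _ hQ hQ' h2 h3; subst Q'.
    rewrite /zord r1 r2 eqxx /=; apply/existsP; exists P; rewrite hP /=.
    apply/existsP; exists R; rewrite hR /=.
    rewrite h1 h4 r1 r2 !eqxx /=; exact: (lttr P Q R).
  + by move=> x y /andP[/eqP -> _].
- split; first exact: zsym.
  split; first by move=> z; rewrite /zedge eqxx.
  rewrite colE.
  split.
    move=> C /imsetP[P0 hP0 ->]; apply/negP.
    move=> /existsP[P /andP[hP /existsP[Q /andP[hQ /and3P[/eqP e1 /eqP e2 l]]]]].
    have E1 := inj _ _ hP0 hP e1; have E2 := inj _ _ hP0 hQ e2; subst P Q.
    by move: (ltirr P0 hP0); rewrite l.
  split.
    move=> C D E /imsetP[P0 hP0 ->] /imsetP[Q0 hQ0 ->] /imsetP[R0 hR0 ->].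
    move=> /existsP[P /andP[hP /existsP[Q /andP[hQ /and3P[/eqP e1 /eqP e2 l1]]]]].
    move=> /existsP[Q' /andP[hQ' /existsP[R /andP[hR /and3P[/eqP e3 /eqP e4 l2]]]]].
    have E1 := inj _ _ hP0 hP e1; have E2 := inj _ _ hQ0 hQ e2.
    have E3 := inj _ _ hQ0 hQ' e3; have E4 := inj _ _ hR0 hR e4.
    subst P Q Q' R.
    apply/existsP; exists P0; rewrite hP0 /=; apply/existsP; exists R0.
    rewrite hR0 !eqxx /=; exact: (lttr P0 Q0 R0).
  split.
    move=> C /imsetP[Q hQ ->] x y; rewrite !inE => /eqP hx /eqP hy nxy.
    have [R|R] := eqVneq (zrow r e blk x) (zrow r e blk y).
      by move: nxy; rewrite (@zeq I T r e p blk x y Q R hx hy) eqxx.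
    rewrite /zedge R /=; apply/existsP; exists Q; by rewrite hQ hx hy !eqxx.
  split.
    move=> C /imsetP[Q hQ ->] x y; rewrite !inE => /eqP hx /eqP hy R.
    exact: (@zeq I T r e p blk x y Q R hx hy).
  split.
    move=> C D /imsetP[P0 hP0 ->] /imsetP[Q0 hQ0 ->] x y; rewrite !inE => /eqP hx /eqP hy R.
    move=> /andP[_ /existsP[P /andP[hP /existsP[Q /andP[hQ /and3P[/eqP h1 /eqP h2 l]]]]]].
    have E1 := zu _ _ _ hP0 hP hx h1; have E2 := zu _ _ _ hQ0 hQ hy h2; subst P Q.
    apply/existsP; exists P0; rewrite hP0 /=; apply/existsP; exists Q0.
    by rewrite hQ0 !eqxx l.
  move=> C D /imsetP[P0 hP0 ->] /imsetP[Q0 hQ0 ->].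
  move=> /existsP[P /andP[hP /existsP[Q /andP[hQ /and3P[/eqP e1 /eqP e2 l]]]]].
  have E1 := inj _ _ hP0 hP e1; have E2 := inj _ _ hQ0 hQ e2; subst P Q.
  move=> x y; rewrite !inE => /eqP hx /eqP hy R.
  apply/orP; left; rewrite /zord R eqxx /=.
  apply/existsP; exists P0; rewrite hP0 /=; apply/existsP; exists Q0.
  by rewrite hQ0 hx hy R !eqxx l.
Qed.
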